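(* Let $n\ge 1$ and let $T\in M(n;\mathbb{C})$ be non-singular with $\mathrm{Im}\,T$ positive definite. Let $r\in\mathbb{N}$, $A=(a_{ij})\in M(n;\mathbb{Z})$, $p,q\in\mathbb{R}^n$, let $r'\in\mathbb{N}$ be the integer attached to $(r,A)$ as in the context, and let $\mathcal{U}=\{V_1,\dots,V_n,U_1,\dots,U_n\}\subset U(r')$ satisfy $V_jV_k=V_kV_j$, $U_jU_k=U_kU_j$, $\zeta^{-a_{kj}}U_kV_j=V_jU_k$ for all $j,k$, where $\zeta=e^{2\pi\mathbf{i}/r}$. Then the complex vector bundle $E_{(r,A,r',\mathcal{U},p,q)}\to T^{2n}_{J=T}$ with connection $\nabla_{(r,A,r',\mathcal{U},p,q)}$ is holomorphic (that is, the $(0,2)$-part of the curvature of $\nabla_{(r,A,r',\mathcal{U},p,q)}$ vanishes, so that its $(0,1)$-part defines a holomorphic structure) if and only if $AT=(AT)^t$.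
   Context: $T^{2n}_{J=T}:=\mathbb{C}^n/2\pi(\mathbb{Z}^n\oplus T\mathbb{Z}^n)$, identified with $\mathbb{R}^{2n}/2\pi\mathbb{Z}^{2n}$ via real coordinates $(x,y)\in\mathbb{R}^n\times\mathbb{R}^n$, with complex coordinates $z=x+Ty$. Definition of $r'$: choose $\mathcal{A},\mathcal{B}\in GL(n;\mathbb{Z})$ with $\mathcal{A}A\mathcal{B}=\mathrm{diag}(\tilde a_1,\dots,\tilde a_s,0,\dots,0)$, $\tilde a_i\in\mathbb{N}$, $\tilde a_i\mid\tilde a_{i+1}$; write $\tilde a_i/r=a_i'/r_i'$ with $r_i'\in\mathbb{N}$, $a_i'\in\mathbb{Z}$, $\gcd(r_i',a_i')=1$, and set $r':=r_1'\cdots r_s'$ (this depends only on $(r,A)$). The rank-$r'$ complex vector bundle $E_{(r,A,r',\mathcal{U},p,q)}$ is defined by transition functions: its smooth sections are smooth maps $\psi:\mathbb{R}^{2n}\to\mathbb{C}^{r'}$ with $\psi(x+2\pi e_j,y)=e^{\frac{\mathbf{i}}{r}a_jy}V_j\psi(x,y)$ and $\psi(x,y+2\pi e_k)=U_k\psi(x,y)$, where $a_jy:=\sum_i a_{ij}y_i$ ($e_j$ the standard basis vectors). Its connection is $\nabla_{(r,A,r',\mathcal{U},p,q)}:=d-\frac{\mathbf{i}}{2\pi}\left(\frac1r x^tA^t+\frac1r p^t+\frac1r q^tT\right)dy\cdot I_{r'}$, where $dy=(dy_1,\dots,dy_n)^t$; it is compatible with the transition functions. *)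

(* Defs.v *)
From HB Require Import structures.
From mathcomp Require Import all_boot all_order all_algebra.
From mathcomp Require Import all_classical all_reals all_analysis.
From mathcomp Require Import complex.
Set Implicit Arguments. Unset Strict Implicit. Unset Printing Implicit Defensive.
Import Order.TTheory GRing.Theory Num.Theory.
Local Open Scope ring_scope.
Local Open Scope complex_scope.

Section Defs.
Variable R : realType.
Local Notation C := (R[i]).

Definition xcoord n (u : 'rV[R]_(n + n)) : 'rV[R]_n := lsubmx u.
Definition ycoord n (u : 'rV[R]_(n + n)) : 'rV[R]_n := rsubmx u.

Definition evec m (mu : 'I_m) : 'rV[R]_m := delta_mx 0 mu.

Definition cpartial m (g : 'rV[R]_m -> C) (mu : 'I_m) (u : 'rV[R]_m) : C :=
  (derive1 (fun t : R => complex.Re (g (u + t *: evec mu))) 0)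
    +i* (derive1 (fun t : R => complex.Im (g (u + t *: evec mu))) 0).

Definition mxpartial m k (g : 'rV[R]_m -> 'M[C]_k) (mu : 'I_m) (u : 'rV[R]_m)
  : 'M[C]_k := \matrix_(a, b) cpartial (fun v => g v a b) mu u.

(* A connection d + omega on a trivialised rank-k bundle over R^m, with
   omega = sum_mu omega_mu du_mu (omega_mu : R^m -> M_k(C)).  Its curvature
   Omega = d omega + omega /\ omega has components
   Omega_{mu nu} = d_mu omega_nu - d_nu omega_mu + [omega_mu, omega_nu]. *)
Definition curvature m k (omega : 'I_m -> 'rV[R]_m -> 'M[C]_k)
  (u : 'rV[R]_m) (mu nu : 'I_m) : 'M[C]_k :=
  mxpartial (omega nu) mu u - mxpartial (omega mu) nu u
  + (omega mu u *m omega nu u - omega nu u *m omega mu u).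

Definition eval2 m k (F : 'I_m -> 'I_m -> 'M[C]_k) (v w : 'rV[C]_m) : 'M[C]_k :=
  \sum_(mu < m) \sum_(nu < m) (v 0 mu * w 0 nu) *: F mu nu.

(* Complex structure J = T on R^{2n}: z = x + T y, i.e. dz_j = dx_j + sum_k T_jk dy_k.
   T^{0,1} = complexified tangent vectors annihilated by all dz_j. *)
Definition in_T01 n (T : 'M[C]_n) (v : 'rV[C]_(n + n)) : Prop :=
  forall j : 'I_n, lsubmx v 0 j + \sum_(k < n) T j k * rsubmx v 0 k = 0.

Definition curvature02_vanishes n k (T : 'M[C]_n)
  (omega : 'I_(n + n) -> 'rV[R]_(n + n) -> 'M[C]_k) : Prop :=
  forall (u : 'rV[R]_(n + n)) (v w : 'rV[C]_(n + n)),
    in_T01 T v -> in_T01 T w -> eval2 (curvature omega u) v w = 0.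

(* nabla = d - (i/2pi) ( (1/r) x^t A^t + (1/r) p^t + (1/r) q^t T ) dy . I_{r'} ;
   the coefficient of dy_i is (A x)_i + p_i + (q^t T)_i. *)
Definition conn_coeff n (r : nat) (A : 'M[int]_n) (p q : 'rV[R]_n) (T : 'M[C]_n)
  (u : 'rV[R]_(n + n)) (i : 'I_n) : C :=
  - ('i / (2 * pi)%:C) *
    ((r%:R : R)^-1)%:C *
    ( (\sum_(j < n) ((A i j)%:~R * xcoord u 0 j))%:C
      + (p 0 i)%:C
      + \sum_(k < n) (q 0 k)%:C * T k i ).

Definition conn_form n (r : nat) (A : 'M[int]_n) (r' : nat) (p q : 'rV[R]_n)
  (T : 'M[C]_n) : 'I_(n + n) -> 'rV[R]_(n + n) -> 'M[C]_r' :=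
  fun mu u => match fintype.split mu with
              | inl _ => 0
              | inr i => conn_coeff r A p q T u i *: 1%:M
              end.

Definition unimodular n (M : 'M[int]_n) : Prop := \det M = 1 \/ \det M = -1.

Definition attached_rank n (r : nat) (A : 'M[int]_n) (r' : nat) : Prop :=
  exists (PA QB : 'M[int]_n) (s : nat) (at_ : nat -> nat)
         (rr : nat -> nat) (aa : nat -> int),
    unimodular PA /\ unimodular QB /\ (s <= n)%N /\
        PA *m A *m QB = \matrix_(i, j) (if (i == j :> nat) && (i < s)%N
                                         then (at_ i)%:Z else 0) /\
        (forall i, (i < s)%N -> 0 < at_ i)%N /\
        (forall i, (i.+1 < s)%N -> at_ i %| at_ i.+1)%N /\
        (forall i, (i < s)%N -> (0 < rr i)%N /\ coprime (rr i) `|aa i|%N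
                                /\ (at_ i)%:Z * (rr i)%:Z = aa i * r%:Z) /\
        r' = (\prod_(i < s) rr i)%N.

Definition unitary k (U : 'M[C]_k) : Prop := U *m (map_mx conjc U)^T = 1%:M.

Definition zeta (r : nat) : C :=
  cos (2 * pi / r%:R) +i* sin (2 * pi / r%:R).

End Defs.

(* Main.v *)
Require Import Defs.
From HB Require Import structures.
From mathcomp Require Import all_boot all_order all_algebra.
From mathcomp Require Import all_classical all_reals all_analysis.
From mathcomp Require Import complex.
From mathcomp Require Import ring lra.
Import Order.TTheory GRing.Theory Num.Theory.
Local Open Scope ring_scope.
Local Open Scope complex_scope.
Set Implicit Arguments. Unset Strict Implicit. Unset Printing Implicit Defensive.

Lemma aff (R : realType) (a b : R) : derive1 (fun t : R => a + t * b) 0 = b.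
Proof.
rewrite derive1E; apply: derive_val.
apply: is_derive_eq.
by rewrite /= add0r mul1r scaler0 add0r; exact: mulr1.
Qed.

Lemma cpartial_affine (R : realType) m (g : 'rV[R]_m -> R[i]) mu u d :
  (forall t, g (u + t *: evec R mu) = g u + t%:C * d) -> cpartial g mu u = d.
Proof.
move=> H; rewrite /cpartial.
have -> : (fun t => complex.Re (g (u + t *: evec R mu)))
   = (fun t => complex.Re (g u) + t * complex.Re d).
  apply: funext => t; rewrite H; case: (g u) => a b; clear H; case: d => c e /=.
  by rewrite mul0r subr0.
have -> : (fun t => complex.Im (g (u + t *: evec R mu)))
   = (fun t => complex.Im (g u) + t * complex.Im d).
  apply: funext => t; rewrite H; case: (g u) => a b; clear H; case: d => c e /=.
  by rewrite mul0r addr0.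
by rewrite !aff; clear H; case: d.
Qed.

Definition kap (R : realType) (r : nat) : R[i] :=
  - ('i / (2 * pi)%:C) * ((r%:R : R)^-1)%:C.

Lemma coeff_shift (R : realType) n r (A : 'M[int]_n) (p q : 'rV[R]_n) T u t mu i :
  conn_coeff r A p q T (u + t *: evec R mu) i = conn_coeff r A p q T u i +
   t%:C * (kap R r * (\sum_j ((A i j)%:~R * xcoord (evec R mu) 0 j))%:C).
Proof.
rewrite /conn_coeff.
have -> : \sum_(j < n) (A i j)%:~R * xcoord (u + t *: evec R mu) 0 j
  = \sum_(j < n) (A i j)%:~R * xcoord u 0 j + t * \sum_j ((A i j)%:~R * xcoord (evec R mu) 0 j).
  rewrite mulr_sumr -big_split /=; apply: eq_bigr => j _.
  by rewrite /xcoord !mxE mulrDr mulrCA.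
rewrite /kap; set c := 'i / _; set S := \sum_(j < n) _ * xcoord (evec R mu) 0 j.
rewrite rmorphD /=.
have -> : (t * S)%:C = t%:C * S%:C by rewrite rmorphM.
ring.
Qed.

Definition Dc (R : realType) n r (A : 'M[int]_n) (nu mu : 'I_(n + n)) : R[i] :=
  match fintype.split nu with
  | inl _ => 0
  | inr i => kap R r * (\sum_j ((A i j)%:~R * xcoord (evec R mu) 0 j))%:C
  end.

Lemma mxpartial_conn (R : realType) n r (A : 'M[int]_n) r' (p q : 'rV[R]_n) T nu mu u :
  mxpartial (conn_form r A r' p q T nu) mu u = Dc R r A nu mu *: 1%:M.
Proof.
apply/matrixP => a b; rewrite /mxpartial !mxE; apply: cpartial_affine => t.
rewrite /conn_form /Dc; case: (fintype.split nu) => [_|i]; rewrite !mxE.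
  by rewrite mul0r mulr0 addr0.
rewrite coeff_shift; ring.
Qed.

Lemma conn_scalar (R : realType) n r (A : 'M[int]_n) r' (p q : 'rV[R]_n) T mu u :
  exists s, conn_form r A r' p q T mu u = s *: 1%:M.
Proof.
rewrite /conn_form; case: (fintype.split mu) => [_|i]; last by eexists.
by exists 0; rewrite scale0r.
Qed.

Lemma curv_conn (R : realType) n r (A : 'M[int]_n) r' (p q : 'rV[R]_n) T u mu nu :
  curvature (conn_form r A r' p q T) u mu nu = (Dc R r A nu mu - Dc R r A mu nu) *: 1%:M.
Proof.
rewrite /curvature !mxpartial_conn.
have [s ->] := conn_scalar r A r' p q T mu u.
have [s' ->] := conn_scalar r A r' p q T nu u.
rewrite -!scalemxAl -!scalemxAr !mul1mx !scalerA mulrC subrr addr0.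
by rewrite scalerBl.
Qed.

Lemma eval2_conn (R : realType) n r (A : 'M[int]_n) r' (p q : 'rV[R]_n) T u v w :
  eval2 (curvature (conn_form r A r' p q T) u) v w =
  (\sum_mu \sum_nu v 0 mu * w 0 nu * (Dc R r A nu mu - Dc R r A mu nu)) *: (1%:M : 'M[R[i]]_r').
Proof.
rewrite /eval2 scaler_suml; apply: eq_bigr => mu _.
rewrite scaler_suml; apply: eq_bigr => nu _.
by rewrite curv_conn scalerA.
Qed.

Lemma split_l n (j : 'I_n) : fintype.split (lshift n j) = inl j.
Proof. exact: (unsplitK (inl j)). Qed.
Lemma split_r n (j : 'I_n) : fintype.split (rshift n j) = inr j.
Proof. exact: (unsplitK (inr j)). Qed.

Lemma Dc_l (R : realType) n r (A : 'M[int]_n) j mu : Dc R r A (lshift n j) mu = 0.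
Proof. by rewrite /Dc split_l. Qed.

Lemma xev_l (R : realType) n (j j' : 'I_n) : xcoord (evec R (lshift n j)) 0 j' = (j' == j)%:R.
Proof. by rewrite /xcoord /evec !mxE eq_lshift. Qed.

Lemma xev_r (R : realType) n (j j' : 'I_n) : xcoord (evec R (rshift n j)) 0 j' = 0.
Proof. by rewrite /xcoord /evec !mxE eq_lrshift andbF. Qed.

Lemma Dc_rl (R : realType) n r (A : 'M[int]_n) i j :
  Dc R r A (rshift n i) (lshift n j) = kap R r * (A i j)%:~R.
Proof.
rewrite /Dc split_r; congr (_ * _).
rewrite (bigD1 j) //= xev_l eqxx mulr1 big1 ?addr0; first by rewrite rmorph_int.
by move=> j' /negbTE hj; rewrite xev_l hj mulr0.
Qed.

Lemma Dc_rr (R : realType) n r (A : 'M[int]_n) i k :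
  Dc R r A (rshift n i) (rshift n k) = 0.
Proof.
rewrite /Dc split_r big1 ?mulr0 //.
by move=> j _; rewrite xev_r mulr0.
Qed.

Lemma S1_eq (R : realType) n r (A : 'M[int]_n) (v w : 'rV[R[i]]_(n + n)) :
  \sum_mu \sum_nu v 0 mu * w 0 nu * Dc R r A nu mu =
  kap R r * \sum_i \sum_j rsubmx w 0 i * (map_mx (fun z : int => z%:~R) A) i j * lsubmx v 0 j.
Proof.
rewrite big_split_ord /= [X in _ + X]big1 ?addr0; last first.
  move=> k _; rewrite big_split_ord /= !big1 ?addr0 // => i _;
    by rewrite ?Dc_l ?Dc_rr mulr0.
rewrite [in RHS]exchange_big mulr_sumr; apply: eq_bigr => j _.
rewrite big_split_ord /= big1 ?add0r; last by move=> i _; rewrite Dc_l mulr0.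
rewrite mulr_sumr; apply: eq_bigr => i _.
rewrite Dc_rl !mxE; ring.
Qed.

Lemma S2_eq (R : realType) n r (A : 'M[int]_n) (v w : 'rV[R[i]]_(n + n)) :
  \sum_mu \sum_nu v 0 mu * w 0 nu * Dc R r A mu nu =
  kap R r * \sum_i \sum_j rsubmx v 0 i * (map_mx (fun z : int => z%:~R) A) i j * lsubmx w 0 j.
Proof.
rewrite big_split_ord /= big1 ?add0r; last first.
  by move=> k _; rewrite big1 // => nu _; rewrite Dc_l mulr0.
rewrite mulr_sumr; apply: eq_bigr => i _.
rewrite big_split_ord /= [X in _ + X]big1 ?addr0; last by move=> k _; rewrite Dc_rr mulr0.
rewrite mulr_sumr; apply: eq_bigr => j _.
rewrite Dc_rl !mxE; ring.
Qed.

Lemma bil (R : realType) n (x y : 'rV[R[i]]_n) (N : 'M[R[i]]_n) :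
  (x *m N *m y^T) 0 0 = \sum_i \sum_j x 0 i * N i j * y 0 j.
Proof.
rewrite mxE [in RHS]exchange_big; apply: eq_bigr => j _.
rewrite !mxE mulr_suml; exact: eq_bigr.
Qed.

Lemma T01_l (R : realType) n (T : 'M[R[i]]_n) v :
  in_T01 T v -> lsubmx v = - (rsubmx v *m T^T).
Proof.
move=> H; apply/matrixP => i j; rewrite (ord1 i).
move: (H j); set L := lsubmx v; set Rv := rsubmx v.
move/eqP; rewrite addr_eq0 => /eqP ->.
rewrite !mxE; congr (- _); apply: eq_bigr => k _; by rewrite !mxE mulrC.
Qed.

Lemma e00N (K : pzRingType) (X : 'M[K]_1) : (- X) 0 0 = - X 0 0.
Proof. by rewrite mxE. Qed.
Lemma e00B (K : pzRingType) (X Y : 'M[K]_1) : (X - Y) 0 0 = X 0 0 - Y 0 0.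
Proof. by rewrite !mxE. Qed.
Lemma e00T (K : pzRingType) (X : 'M[K]_1) : (X^T) 0 0 = X 0 0.
Proof. by rewrite mxE. Qed.

Lemma S_formula (R : realType) n r (A : 'M[int]_n) (T : 'M[R[i]]_n) (v w : 'rV[R[i]]_(n + n)) :
  in_T01 T v -> in_T01 T w ->
  \sum_mu \sum_nu v 0 mu * w 0 nu * (Dc R r A nu mu - Dc R r A mu nu) =
  kap R r * (rsubmx v *m (map_mx (fun z : int => z%:~R) A *m T
        - (map_mx (fun z : int => z%:~R) A *m T)^T) *m (rsubmx w)^T) 0 0.
Proof.
move=> hv hw.
have -> : \sum_mu \sum_nu v 0 mu * w 0 nu * (Dc R r A nu mu - Dc R r A mu nu) =
  \sum_mu \sum_nu v 0 mu * w 0 nu * Dc R r A nu mu -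
  \sum_mu \sum_nu v 0 mu * w 0 nu * Dc R r A mu nu.
  rewrite -sumrB; apply: eq_bigr => mu _; rewrite -sumrB; apply: eq_bigr => nu _.
  by rewrite mulrBr.
rewrite S1_eq S2_eq -!bil (T01_l hv) (T01_l hw) -mulrBr; congr (_ * _).
set M := map_mx _ A; set a := rsubmx v; set b := rsubmx w.
rewrite !linearN /= !trmx_mul !trmxK !e00N !mulmxA.
have -> : (b *m M *m T *m a^T) 0 0 = (a *m T^T *m M^T *m b^T) 0 0.
  by rewrite -e00T !trmx_mul trmxK !mulmxA.
rewrite mulmxBr mulmxBl e00B !mulmxA; ring.
Qed.

Lemma T01_row (R : realType) n (T : 'M[R[i]]_n) (a : 'rV[R[i]]_n) :
  in_T01 T (row_mx (- (a *m T^T)) a).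
Proof.
move=> j; rewrite row_mxKl row_mxKr.
have -> : (- (a *m T^T)) 0 j = - \sum_k T j k * a 0 k.
  rewrite !mxE; congr (- _); apply: eq_bigr => k _; by rewrite !mxE mulrC.
by rewrite addNr.
Qed.

Lemma kap_neq0 (R : realType) r : (0 < r)%N -> kap R r != 0.
Proof.
move=> hr; rewrite /kap.
have hC : forall x : R, x != 0 -> x%:C != 0.
  move=> x hx; apply/eqP => h; move: hx; rewrite -(@complexI R x 0) ?eqxx //.
have hi : ('i : R[i]) != 0 by apply/eqP => -[] /eqP; rewrite oner_eq0.
have h2 : (2 * pi : R) != 0.
  by rewrite mulf_neq0 // ?pnatr_eq0 //; exact: lt0r_neq0 (pi_gt0 R).
have hr' : ((r%:R : R)^-1) != 0 by rewrite invr_eq0 pnatr_eq0 -lt0n.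
rewrite mulf_neq0 // ?oppr_eq0 ?mulf_neq0 ?invr_eq0 //; exact: hC.
Qed.

Lemma sel (R : pzRingType) n (i k : 'I_n) (N : 'M[R]_n) :
  (delta_mx (0 : 'I_1) i *m N *m (delta_mx (0 : 'I_1) k)^T) 0 0 = N i k.
Proof. by rewrite -rowE trmx_delta -colE !mxE. Qed.

Theorem proposition3p1 (R : realType) (n : nat) (T : 'M[R[i]]_n)
  (r : nat) (A : 'M[int]_n) (p q : 'rV[R]_n) (r' : nat)
  (V U : 'I_n -> 'M[R[i]]_r') :
  (1 <= n)%N ->
  T \in unitmx ->
  (forall v : 'rV[R]_n, v != 0 -> 0 < (v *m map_mx (@complex.Im R) T *m v^T) 0 0) ->
  (0 < r)%N ->
  attached_rank r A r' ->
  (forall j, unitary (V j)) -> (forall k, unitary (U k)) ->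
  (forall j k, V j *m V k = V k *m V j) ->
  (forall j k, U j *m U k = U k *m U j) ->
  (forall j k, (zeta R r ^ (- A k j)) *: (U k *m V j) = V j *m U k) ->
  (curvature02_vanishes T (conn_form r A r' p q T)
   <-> map_mx (fun z : int => z%:~R) A *m T = (map_mx (fun z : int => z%:~R) A *m T)^T).
Proof.
move=> _ _ _ hr hatt _ _ _ _ _.
have hr' : (0 < r')%N.
  case: hatt => PA [QB [s [at_ [rr [aa [_ [_ [_ [_ [_ [_ [hrr ->]]]]]]]]]]]].
  by apply: prodn_gt0 => i; case: (hrr i (ltn_ord i)).
split.
- move=> H; apply/matrixP => i k.
  set M := map_mx _ A *m T.
  pose a : 'rV[R[i]]_n := delta_mx 0 i.
  pose b : 'rV[R[i]]_n := delta_mx 0 k.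
  have := H 0 _ _ (T01_row T a) (T01_row T b).
  rewrite eval2_conn (@S_formula _ _ r A _ _ _ (T01_row T a) (T01_row T b)) !row_mxKr sel.
  move=> /matrixP /(_ (Ordinal hr') (Ordinal hr')); rewrite !mxE eqxx mulr1.
  move/eqP; rewrite mulf_eq0 (negbTE (kap_neq0 R hr)) /= subr_eq0 => /eqP //.
- move=> Hsym u v w hv hw.
  by rewrite eval2_conn (@S_formula _ _ r A _ _ _ hv hw) -Hsym subrr mulmx0 mul0mx mxE mulr0 scale0r.
Qed.
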